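(* Let $u,v>0$ and consider the map $(x,y)\mapsto\big(uy(1-y),\ vx(1-x)\big)$ (Kopel's map with $a=b=1$). Define $R_1=u^2v^2-4u^2v-4uv^2+18uv-27$, $S_3=u^3v^3-4u^3v^2-4u^2v^3+15u^2v^2+12u^2v+12uv^2-85uv+125$, $A_1=uv-15$, $A_2=u^2v^2-4u^2v-5uv^2+21uv+11v-60$. If $R_1>0$, $S_3>0$, $A_1<0$ and $A_2>0$, then two locally stable positive equilibria exist. Furthermore, exactly one locally stable positive equilibrium exists if either ($uv>1$, $R_1<0$, $S_3>0$) or ($uv>1$, $R_1>0$, $S_3<0$).
   Context: An equilibrium is a real fixed point $(x^*,y^* )$; it is positive if $x^*,y^*>0$. An equilibrium is called (locally) stable if both eigenvalues of the Jacobian matrix of the map at it have modulus less than $1$; for a general Kopel map $(x,y)\mapsto((1-a)x+auy(1-y),(1-b)y+bvx(1-x))$ the Jacobian at $(x^*,y^* )$ is $\begin{pmatrix}1-a & ua(1-2y^* )\\ vb(1-2x^* ) & 1-b\end{pmatrix}$, and stability is equivalent to the Jury conditions $1-\mathrm{Tr}(J)+\mathrm{Det}(J)>0$, $1+\mathrm{Tr}(J)+\mathrm{Det}(J)>0$, $1-\mathrm{Det}(J)>0$. *)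

(* Defs.v *)
From Stdlib Require Import Reals.
From Coquelicot Require Import Coquelicot.
Open Scope R_scope.

Definition kopel (a b u v : R) (p : R * R) : R * R :=
  ((1 - a) * fst p + a * u * snd p * (1 - snd p),
   (1 - b) * snd p + b * v * fst p * (1 - fst p)).

Definition J11 (a b u v x y : R) : R := 1 - a.
Definition J12 (a b u v x y : R) : R := u * a * (1 - 2 * y).
Definition J21 (a b u v x y : R) : R := v * b * (1 - 2 * x).
Definition J22 (a b u v x y : R) : R := 1 - b.

Definition is_equilibrium (a b u v x y : R) : Prop := kopel a b u v (x, y) = (x, y).

Definition is_positive (x y : R) : Prop := 0 < x /\ 0 < y.

Definition is_eigenvalue (a b u v x y : R) (lam : C) : Prop :=
  ((RtoC (J11 a b u v x y) - lam) * (RtoC (J22 a b u v x y) - lam)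
    - RtoC (J12 a b u v x y) * RtoC (J21 a b u v x y))%C = 0%C.

Definition locally_stable (a b u v x y : R) : Prop :=
  forall lam : C, is_eigenvalue a b u v x y lam -> Cmod lam < 1.

Definition stable_pos_eq (u v x y : R) : Prop :=
  is_equilibrium 1 1 u v x y /\ is_positive x y /\ locally_stable 1 1 u v x y.

Definition kR1 (u v : R) : R :=
  u^2*v^2 - 4*u^2*v - 4*u*v^2 + 18*u*v - 27.
Definition kS3 (u v : R) : R :=
  u^3*v^3 - 4*u^3*v^2 - 4*u^2*v^3 + 15*u^2*v^2 + 12*u^2*v + 12*u*v^2 - 85*u*v + 125.
Definition kA1 (u v : R) : R := u*v - 15.
Definition kA2 (u v : R) : R :=
  u^2*v^2 - 4*u^2*v - 5*u*v^2 + 21*u*v + 11*v - 60.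

(* Main.v *)
Require Import Defs.
From Stdlib Require Import Reals Lra Psatz.
From Coquelicot Require Import Coquelicot.
Open Scope R_scope.

Lemma stab_iff (u v x y : R) :
  locally_stable 1 1 u v x y <-> Rabs (u*(1-2*y)*(v*(1-2*x))) < 1.
Proof.
  set (p := u*(1-2*y)*(v*(1-2*x))).
  assert (Hev : forall l1 l2, is_eigenvalue 1 1 u v x y (l1,l2) <-> (l1*l1 - l2*l2 = p /\ l1*l2 = 0)).
  { intros l1 l2. unfold is_eigenvalue, J11, J12, J21, J22, Cminus, Cmult, Cplus, Copp, RtoC; simpl.
    split.
    - intro H. injection H as H1 H2. unfold p. split; nra.
    - intros [H1 H2]. unfold p in H1. f_equal; nra. }
  split.
  - intro H. unfold locally_stable in H.
    destruct (Rle_dec 0 p) as [Hp|Hp].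
    + assert (Hq : sqrt p * sqrt p - 0 * 0 = p) by (rewrite sqrt_sqrt by lra; ring).
      assert (Hq2 : sqrt p * 0 = 0) by ring.
      assert (Hc := H (sqrt p, 0) (proj2 (Hev _ _) (conj Hq Hq2))).
      unfold Cmod in Hc; cbn [fst snd] in Hc.
      replace (sqrt p ^ 2 + 0 ^ 2) with p in Hc by (rewrite <- (sqrt_sqrt p) at 1 by lra; ring).
      rewrite Rabs_right by lra.
      destruct (Rlt_dec p 1); auto.
      assert (1 <= sqrt p). { rewrite <- sqrt_1. apply sqrt_le_1_alt. lra. }
      lra.
    + assert (Hq : 0 * 0 - sqrt (-p) * sqrt (-p) = p) by (rewrite sqrt_sqrt by lra; ring).
      assert (Hq2 : 0 * sqrt (-p) = 0) by ring.
      assert (Hc := H (0, sqrt (-p)) (proj2 (Hev _ _) (conj Hq Hq2))).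
      unfold Cmod in Hc; cbn [fst snd] in Hc.
      replace (0 ^ 2 + sqrt (-p) ^ 2) with (-p) in Hc by (rewrite <- (sqrt_sqrt (-p)) at 1 by lra; ring).
      rewrite Rabs_left by lra.
      destruct (Rlt_dec (-p) 1); auto.
      assert (1 <= sqrt (-p)). { rewrite <- sqrt_1. apply sqrt_le_1_alt. lra. }
      lra.
  - intros Hp [l1 l2] Hl. apply Hev in Hl. destruct Hl as [H1 H2].
    unfold Cmod; cbn [fst snd]. apply Rlt_le_trans with (sqrt 1); [|rewrite sqrt_1; lra].
    apply sqrt_lt_1_alt.
    split. nra.
    apply Rabs_def2 in Hp. destruct Hp.
    assert (l1 = 0 \/ l2 = 0) as [->| ->] by (apply Rmult_integral; auto); nra.
Qed.

Lemma equil_iff (u v x y : R) :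
  is_equilibrium 1 1 u v x y <-> x = u*y*(1-y) /\ y = v*x*(1-x).
Proof.
  unfold is_equilibrium, kopel; simpl. split.
  - intro H. injection H as H1 H2. split; nra.
  - intros [H1 H2]. f_equal; nra.
Qed.

Definition gg u v x := u*v*(1-x)*(1-v*x*(1-x)) - 1.
Definition gd u v x := -3*u*v^2*x^2 + 4*u*v^2*x - u*v*(v+1).
Definition Wt u v x := -2*u*v^2*x^2 + (2*u*v^2+2*u*v)*x + (5-3*u*v).

Lemma roots01 u v x : 0 < u -> 0 < v -> 1 < u*v -> gg u v x = 0 -> 0 < x < 1.
Proof.
  intros hu hv huv H. unfold gg in H.
  destruct (Rle_dec x 0) as [h0|h0].
  { exfalso. assert (1 <= 1 - x) by lra. assert (1 <= 1 - v*x*(1-x)).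
    { assert (0 <= v*(-x)*(1-x)) by (apply Rmult_le_pos; [apply Rmult_le_pos|]; lra). nra. }
    assert (u*v*1*1 <= u*v*(1-x)*(1-v*x*(1-x))).
    { apply Rmult_le_compat; try lra. apply Rmult_le_compat_l; lra. }
    lra. }
  destruct (Rle_dec 1 x) as [h1|h1].
  { exfalso. assert (0 <= x - 1) by lra. assert (1 <= 1 - v*x*(1-x)).
    { assert (0 <= v*x*(x-1)) by (apply Rmult_le_pos; [apply Rmult_le_pos|]; lra). nra. }
    assert (0 <= u*v*(x-1)*(1-v*x*(1-x))).
    { apply Rmult_le_pos; [apply Rmult_le_pos|]; nra. }
    nra. }
  lra.
Qed.

Lemma p_ident u v x :
  u*(1-2*(v*x*(1-x)))*(v*(1-2*x)) = 1 + gg u v x + x * gd u v x.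
Proof. unfold gg, gd. ring. Qed.

Lemma Wt_ident u v x :
  Wt u v x = 2 + (gg u v x + x * gd u v x) - 4 * gg u v x.
Proof. unfold gg, gd, Wt. ring. Qed.

Lemma spe_iff u v x y : 0 < u -> 0 < v -> 1 < u*v ->
  (stable_pos_eq u v x y <->
   y = v*x*(1-x) /\ gg u v x = 0 /\ gd u v x < 0 /\ 0 < Wt u v x).
Proof.
  intros hu hv huv. unfold stable_pos_eq, is_positive.
  rewrite equil_iff, stab_iff.
  split.
  - intros [[Hx Hy] [[px py] Hs]].
    assert (Hg : gg u v x = 0).
    { unfold gg. rewrite <- Hy.
      assert (x * (u*v*(1-x)*(1-y) - 1) = 0).
      { replace (x * (u*v*(1-x)*(1-y) - 1)) with (u*(v*x*(1-x))*(1-y) - x) by ring.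
        rewrite <- Hy. lra. }
      apply Rmult_integral in H. destruct H; lra. }
    pose proof (roots01 u v x hu hv huv Hg) as [x0 x1].
    subst y. rewrite p_ident, Hg in Hs. rewrite Wt_ident, Hg.
    apply Rabs_def2 in Hs. destruct Hs.
    repeat split; auto.
    + assert (x * gd u v x < 0) by lra. nra.
    + lra.
  - intros [Hy [Hg [Hd HW]]].
    pose proof (roots01 u v x hu hv huv Hg) as [x0 x1].
    rewrite Wt_ident, Hg in HW.
    subst y.
    split; [split|split; [split|]].
    + unfold gg in Hg. 
      replace (u * (v * x * (1 - x)) * (1 - v * x * (1 - x))) with (x * (u*v*(1-x)*(1-v*x*(1-x)))) by ring.
      replace (u*v*(1-x)*(1-v*x*(1-x))) with 1 by lra. ring.
    + reflexivity.
    + lra.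
    + assert (0 < x*(1-x)) by nra. nra.
    + rewrite p_ident, Hg. apply Rabs_def1.
      * assert (x * gd u v x < 0) by nra. lra.
      * lra.
Qed.

Lemma ivt_root u v : 0 < u -> 0 < v -> 1 < u*v -> exists r, 0 < r < 1 /\ gg u v r = 0.
Proof.
  intros hu hv huv.
  assert (Hc : continuity (fun x => - gg u v x)).
  { unfold gg. reg. }
  destruct (IVT (fun x => - gg u v x) 0 1 Hc ltac:(lra)) as [z [Hz1 Hz2]].
  { unfold gg. lra. }
  { unfold gg. lra. }
  exists z. assert (gg u v z = 0) by lra. split; auto.
  apply (roots01 u v z); auto.
Qed.

Definition bet u v r := -u*v^2*r + 2*u*v^2.
Definition gam u v r := -u*v^2*r^2 + 2*u*v^2*r - u*v^2 - u*v.
Definition Dq u v r := bet u v r ^2 + 4*u*v^2*gam u v r.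
Definition kR1' (u v : R) : R := u^2*v^2 - 4*u^2*v - 4*u*v^2 + 18*u*v - 27.

Lemma fact_ident u v r x : gg u v x - gg u v r = (x - r) * (-u*v^2*x^2 + bet u v r * x + gam u v r).
Proof. unfold gg, bet, gam. ring. Qed.

Lemma qr_ident u v r : -u*v^2*r^2 + bet u v r * r + gam u v r = gd u v r.
Proof. unfold gd, bet, gam. ring. Qed.

Lemma disc_ident u v r : 0 < u -> 0 < v -> gg u v r = 0 -> gd u v r ^ 2 * Dq u v r = u^2*v^4 * kR1' u v.
Proof.
  intros hu hv H.
  assert (E : u^4*v^8*(gd u v r ^ 2 * Dq u v r - u^2*v^4 * kR1' u v) = (27*u^7*v^14*r^3 - 54*u^7*v^14*r^2 + 27*u^7*v^14*r - 4*u^7*v^14 + 27*u^7*v^13*r - 9*u^7*v^13 - 27*u^6*v^12) * gg u v r).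
  { unfold gg, gd, Dq, bet, gam, kR1'. ring. }
  rewrite H, Rmult_0_r in E.
  assert (0 < u^4*v^8) by (apply Rmult_lt_0_compat; apply pow_lt; auto).
  apply Rmult_integral in E. destruct E; lra.
Qed.

Definition alp u v r := - 2*u^2*v^4*r + 2*u^2*v^4 - 2*u^2*v^3.
Definition bet0 u v r := - 2*u^2*v^4*r^2 + 4*u^2*v^4*r - 2*u^2*v^4 + u^2*v^3 - 5*u*v^2.
Definition Mp u v r := -u*v^2 * bet0 u v r ^2 - bet u v r * alp u v r * bet0 u v r + gam u v r * alp u v r ^2.

Lemma norm_ident u v r : 0 < u -> 0 < v -> gg u v r = 0 -> Wt u v r * Mp u v r = - u^3*v^6 * kS3 u v.
Proof.
  intros hu hv H.
  assert (E : u^4*v^8*(Wt u v r * Mp u v r + u^3*v^6 * kS3 u v) = (- 8*u^9*v^18*r^3 + 16*u^9*v^18*r^2 - 8*u^9*v^18*r - 8*u^9*v^17*r + 12*u^9*v^17 - 20*u^9*v^16 + 8*u^9*v^15 - 12*u^8*v^16 + 60*u^8*v^15) * gg u v r).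
  { unfold gg, Wt, Mp, alp, bet0, bet, gam, kS3. ring. }
  rewrite H, Rmult_0_r in E.
  assert (0 < u^4*v^8) by (apply Rmult_lt_0_compat; apply pow_lt; auto).
  apply Rmult_integral in E. destruct E; lra.
Qed.

Lemma Mp_nonpos u v r : 0 < u -> 0 < v -> Dq u v r < 0 -> Mp u v r <= 0.
Proof.
  intros hu hv hD.
  assert (E : 4*(-u*v^2)*Mp u v r = (2*(-u*v^2)*bet0 u v r - bet u v r * alp u v r)^2 - Dq u v r * alp u v r ^2).
  { unfold Mp, Dq. ring. }
  assert (0 < u*v^2) by (apply Rmult_lt_0_compat; [|apply pow_lt]; auto).
  assert (0 <= (2*(-u*v^2)*bet0 u v r - bet u v r * alp u v r)^2) by apply pow2_ge_0.
  assert (0 <= alp u v r ^2) by apply pow2_ge_0.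
  nra.
Qed.

Lemma E_pos s : 118/10 <= s <= 12 -> 0 < -16*s^4 + 600*s^3 - 7777*s^2 + 39198*s - 55225.
Proof.
  intros H. set (t := s - 59/5).
  replace s with (t + 59/5) by (unfold t; ring).
  assert (0 <= t <= 1/5) by (unfold t; lra).
  assert (t^2 <= t/5) by nra.
  assert (t^3 <= t/25) by nra.
  assert (t^4 <= t/125) by nra.
  assert (0 <= t^2) by nra.
  nra.
Qed.
Lemma A_pos s : 118/10 <= s <= 12 -> 0 < 20*s^3 - 320*s^2 + 1104*s - 1100.
Proof.
  intros H. set (t := s - 59/5).
  replace s with (t + 59/5) by (unfold t; ring).
  assert (0 <= t <= 1/5) by (unfold t; lra).
  assert (0 <= t^2) by nra. assert (0 <= t^3) by (simpl; nra).
  nra.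
Qed.


Lemma mul_pos_neg a b : 0 < a -> b < 0 -> a * b < 0.
Proof. intros. assert (0 < a * (-b)) by (apply Rmult_lt_0_compat; lra). lra. Qed.
Lemma mul_nn_np a b : 0 <= a -> b <= 0 -> a * b <= 0.
Proof. intros. assert (0 <= a * (-b)) by (apply Rmult_le_pos; lra). lra. Qed.

Lemma A2_lemma u v : 0 < u -> 0 < v ->
  u^3*v^3 - 4*u^3*v^2 - 4*u^2*v^3 + 15*u^2*v^2 + 12*u^2*v + 12*u*v^2 - 85*u*v + 125 > 0 ->
  u*v < 15 ->
  u^2*v^2 - 4*u^2*v - 5*u*v^2 + 21*u*v + 11*v - 60 > 0 ->
  u^2*v^2 - 4*u^2*v - 4*u*v^2 + 22*u*v - 75 < 0.
Proof.
  intros hu hv HS Hs HA.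
  destruct (Rlt_dec (u^2*v^2 - 4*u^2*v - 4*u*v^2 + 22*u*v - 75) 0) as [|Hk]; [assumption|exfalso].
  apply Rnot_lt_le in Hk.
  assert (Hsig : (4*(u*v)^2-12*(u*v))*v^2 - ((u*v)^3+15*(u*v)^2-85*(u*v)+125)*v + (4*(u*v)^2-12*(u*v))*(u*v) < 0).
  { replace ((4*(u*v)^2-12*(u*v))*v^2 - ((u*v)^3+15*(u*v)^2-85*(u*v)+125)*v + (4*(u*v)^2-12*(u*v))*(u*v))
      with (- ((u^3*v^3 - 4*u^3*v^2 - 4*u^2*v^3 + 15*u^2*v^2 + 12*u^2*v + 12*u*v^2 - 85*u*v + 125) * v)) by ring.
    assert (0 < (u^3*v^3 - 4*u^3*v^2 - 4*u^2*v^3 + 15*u^2*v^2 + 12*u^2*v + 12*u*v^2 - 85*u*v + 125) * v)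
      by (apply Rmult_lt_0_compat; lra).
    lra. }
  assert (Hh : (5*(u*v)-11)*v^2 - ((u*v)^2+21*(u*v)-60)*v + 4*(u*v)^2 < 0).
  { replace ((5*(u*v)-11)*v^2 - ((u*v)^2+21*(u*v)-60)*v + 4*(u*v)^2)
      with (- ((u^2*v^2 - 4*u^2*v - 5*u*v^2 + 21*u*v + 11*v - 60) * v)) by ring.
    assert (0 < (u^2*v^2 - 4*u^2*v - 5*u*v^2 + 21*u*v + 11*v - 60) * v)
      by (apply Rmult_lt_0_compat; lra).
    lra. }
  assert (Hkk : 4*(u*v)*v^2 - ((u*v)^2+22*(u*v)-75)*v + 4*(u*v)^2 <= 0).
  { replace (4*(u*v)*v^2 - ((u*v)^2+22*(u*v)-75)*v + 4*(u*v)^2)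
      with (- ((u^2*v^2 - 4*u^2*v - 4*u*v^2 + 22*u*v - 75) * v)) by ring.
    assert (0 <= (u^2*v^2 - 4*u^2*v - 4*u*v^2 + 22*u*v - 75) * v)
      by (apply Rmult_le_pos; lra).
    lra. }
  assert (Hs3 : 3 < u*v).
  { assert (E : u^2*v^2 - 4*u^2*v - 4*u*v^2 + 22*u*v - 75 = ((u*v)^2 + 22*(u*v) - 75) - 4*(u*v)*(u+v)) by ring.
    assert (0 < (u*v)*(u+v)) by (apply Rmult_lt_0_compat; nra).
    assert (0 < u*v) by nra.
    nra. }
  assert (hs : 0 < u*v) by lra.
  clear HS HA Hk.
  generalize dependent (u*v). intros s Hs Hsig Hh Hkk Hs3 hs.
  clear hu.
  assert (Hpsi : 0 <= s^2 - 14*s + 25).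
  { assert (E16 : 16*s*(4*s*v^2 - (s^2+22*s-75)*v + 4*s^2) = (8*s*v - (s^2+22*s-75))^2 - (s^2 - 14*s + 25)*(s^2 - 6*s + 225))
      by ring.
    assert (0 <= (8*s*v - (s^2+22*s-75))^2) by apply pow2_ge_0.
    assert (16*s*(4*s*v^2 - (s^2+22*s-75)*v + 4*s^2) <= 0).
    { assert (0 <= 16*s) by lra.
      apply mul_nn_np; lra. }
    assert (0 < s^2 - 6*s + 225) by nra.
    destruct (Rle_dec 0 (s^2 - 14*s + 25)) as [|Hn]; [assumption|].
    assert (0 < (-(s^2 - 14*s + 25)) * (s^2 - 6*s + 225)) by (apply Rmult_lt_0_compat; lra).
    lra. }
  assert (Hs118 : 118/10 < s) by nra.
  set (h := (5*s-11)*v^2 - (s^2+21*s-60)*v + 4*s^2) in *.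
  set (sig := (4*s^2-12*s)*v^2 - (s^3+15*s^2-85*s+125)*v + (4*s^2-12*s)*s) in *.
  destruct (Rle_dec 12 s) as [H12|H12].
  - assert (EF : 4*(5*s-11)*h = (2*(5*s-11)*v - (s^2+21*s-60))^2 + (15-s)*(s-12)*(s^2-11*s+20))
      by (unfold h; ring).
    assert (0 <= (2*(5*s-11)*v - (s^2+21*s-60))^2) by apply pow2_ge_0.
    assert (0 <= (15-s)*(s-12)*(s^2-11*s+20)).
    { apply Rmult_le_pos; [apply Rmult_le_pos|]; nra. }
    assert (0 < 4*(5*s-11)) by lra.
    assert (4*(5*s-11)*h < 0) by (apply mul_pos_neg; lra).
    lra.
  - set (psi := s^2 - 14*s + 25) in *.
    set (A := 20*s^3 - 320*s^2 + 1104*s - 1100).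
    set (B := -4*s^4 - 29*s^3 + 1301*s^2 - 5375*s + 5875).
    set (E := -16*s^4 + 600*s^3 - 7777*s^2 + 39198*s - 55225).
    assert (EQ : 4*A*(sig + 4*psi*h) = (2*A*v + B)^2 + psi^2 * E)
      by (unfold A, B, E, sig, h, psi; ring).
    assert (0 < A) by (apply A_pos; lra).
    assert (0 < E) by (apply E_pos; lra).
    assert (0 <= (2*A*v + B)^2) by apply pow2_ge_0.
    assert (0 <= psi^2 * E) by (apply Rmult_le_pos; [apply pow2_ge_0|lra]).
    assert (psi*h <= 0) by (apply mul_nn_np; lra).  
    assert (sig + 4*psi*h < 0) by lra.
    assert (4*A*(sig + 4*psi*h) < 0).
    { assert (0 < 4*A) by lra.
      apply mul_pos_neg; lra. }
    lra.
Qed.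

Definition TwoStable u v := exists x1 y1 x2 y2 : R,
       (x1, y1) <> (x2, y2) /\
       stable_pos_eq u v x1 y1 /\ stable_pos_eq u v x2 y2 /\
       (forall x y : R, stable_pos_eq u v x y -> (x, y) = (x1, y1) \/ (x, y) = (x2, y2)).
Definition OneStable u v := exists x0 y0 : R,
       stable_pos_eq u v x0 y0 /\
       (forall x y : R, stable_pos_eq u v x y -> (x, y) = (x0, y0)).

Definition Fact u v a b c := forall x, gg u v x = -u*v^2*(x-a)*(x-b)*(x-c).

Lemma vieta u v a b c : 0 < u -> 0 < v -> Fact u v a b c ->
  a+b+c = 2 /\ a*b+b*c+c*a = (v+1)/v /\ a*b*c = (u*v-1)/(u*v^2).
Proof.
  intros hu hv Hf.
  pose proof (Hf 0) as H0. pose proof (Hf 1) as H1. pose proof (Hf (-1)) as H2.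
  unfold gg in H0, H1, H2.
  assert (huv : 0 < u*v^2) by (apply Rmult_lt_0_compat; [|apply pow_lt]; auto).
  assert (E0 : u*v^2*(a*b*c) = u*v-1).
  { replace (u*v-1) with (u*v*(1-0)*(1-v*0*(1-0))-1) by ring. rewrite H0. ring. }
  assert (E1 : u*v^2*(1 - (a+b+c) + (a*b+b*c+c*a) - a*b*c) = -(u*v*(1-1)*(1-v*1*(1-1))-1)).
  { rewrite H1. ring. }
  assert (E2 : u*v^2*(1 + (a+b+c) + (a*b+b*c+c*a) + a*b*c) = u*v*(1-(-1))*(1-v*(-1)*(1-(-1)))-1).
  { rewrite H2. ring. }
  assert (Q2 : u*v^2*(a*b+b*c+c*a) = u*v^2 + u*v) by nra.
  assert (Q1 : u*v^2*(a+b+c) = 2*u*v^2) by nra.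
  split; [|split].
  - apply (Rmult_eq_reg_l (u*v^2)); lra.
  - apply (Rmult_eq_reg_l (u*v^2)); [|lra]. rewrite Q2. field. lra.
  - apply (Rmult_eq_reg_l (u*v^2)); [|lra]. rewrite E0. field. lra.
Qed.

Lemma gd_root u v a b c : 0 < u -> 0 < v -> Fact u v a b c ->
  gd u v a = -u*v^2*(a-b)*(a-c).
Proof.
  intros hu hv Hf. destruct (vieta u v a b c hu hv Hf) as [H1 [H2 H3]].
  unfold gd.
  replace (-3*u*v^2*a^2 + 4*u*v^2*a - u*v*(v+1)) with (-u*v^2*(3*a^2 - 2*(a+b+c)*a + (a*b+b*c+c*a))).
  - ring.
  - rewrite H1, H2. field. lra.
Qed.

Lemma Wsym u v a b c : 0 < u -> 0 < v -> Fact u v a b c ->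
  Wt u v a + Wt u v b + Wt u v c = 15 - u*v /\
  Wt u v a * Wt u v b + Wt u v b * Wt u v c + Wt u v c * Wt u v a =
     -(u^2*v^2 - 4*u^2*v - 4*u*v^2 + 22*u*v - 75) /\
  Wt u v a * Wt u v b * Wt u v c = kS3 u v.
Proof.
  intros hu hv Hf. destruct (vieta u v a b c hu hv Hf) as [H1 [H2 H3]].
  pose (E1 := a+b+c). pose (E2 := a*b+b*c+c*a). pose (E3 := a*b*c).
  assert (G1 : Wt u v a + Wt u v b + Wt u v c = (- 2*u*v^2*E1^2 + 2*u*v^2*E1 + 4*u*v^2*E2 + 2*u*v*E1 - 9*u*v + 15)) by (unfold E1, E2, E3, Wt; ring).
  assert (G2 : Wt u v a * Wt u v b + Wt u v b * Wt u v c + Wt u v c * Wt u v a = (- 4*u^2*v^4*E1*E2 - 8*u^2*v^4*E1*E3 + 4*u^2*v^4*E2^2 + 4*u^2*v^4*E2 + 12*u^2*v^4*E3 + 12*u^2*v^3*E1^2 - 4*u^2*v^3*E1*E2 - 12*u^2*v^3*E1 - 16*u^2*v^3*E2 + 12*u^2*v^3*E3 - 12*u^2*v^2*E1 + 4*u^2*v^2*E2 + 27*u^2*v^2 - 20*u*v^2*E1^2 + 20*u*v^2*E1 + 40*u*v^2*E2 + 20*u*v*E1 - 90*u*v + 75)) by (unfold E1, E2, E3, Wt; ring).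
  assert (G3 : Wt u v a * Wt u v b * Wt u v c = (- 8*u^3*v^6*E1*E3 + 8*u^3*v^6*E2*E3 - 8*u^3*v^6*E3^2 + 8*u^3*v^6*E3 + 12*u^3*v^5*E1*E2 + 8*u^3*v^5*E1*E3 - 12*u^3*v^5*E2^2 + 8*u^3*v^5*E2*E3 - 12*u^3*v^5*E2 - 12*u^3*v^5*E3 - 18*u^3*v^4*E1^2 + 12*u^3*v^4*E1*E2 - 8*u^3*v^4*E1*E3 + 18*u^3*v^4*E1 + 12*u^3*v^4*E2 - 12*u^3*v^4*E3 + 18*u^3*v^3*E1 - 12*u^3*v^3*E2 + 8*u^3*v^3*E3 - 27*u^3*v^3 - 20*u^2*v^4*E1*E2 - 40*u^2*v^4*E1*E3 + 20*u^2*v^4*E2^2 + 20*u^2*v^4*E2 + 60*u^2*v^4*E3 + 60*u^2*v^3*E1^2 - 20*u^2*v^3*E1*E2 - 60*u^2*v^3*E1 - 80*u^2*v^3*E2 + 60*u^2*v^3*E3 - 60*u^2*v^2*E1 + 20*u^2*v^2*E2 + 135*u^2*v^2 - 50*u*v^2*E1^2 + 50*u*v^2*E1 + 100*u*v^2*E2 + 50*u*v*E1 - 225*u*v + 125)) by (unfold E1, E2, E3, Wt; ring).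
  assert (HE1 : E1 = 2) by exact H1.
  assert (HE2 : E2 = (v+1)/v) by exact H2.
  assert (HE3 : E3 = (u*v-1)/(u*v^2)) by exact H3.
  rewrite HE1, HE2 in G1. rewrite HE1, HE2, HE3 in G2, G3.
  rewrite G1, G2, G3. unfold kS3.
  split; [|split]; field; lra.
Qed.

Lemma root_of_fact u v a b c x : Fact u v a b c -> 0 < u -> 0 < v -> gg u v x = 0 -> x = a \/ x = b \/ x = c.
Proof.
  intros Hf hu hv H. rewrite Hf in H.
  assert (huv : 0 < u*v^2) by (apply Rmult_lt_0_compat; [|apply pow_lt]; auto).
  assert (((x-a)*(x-b))*(x-c) = 0).
  { apply (Rmult_eq_reg_l (-u*v^2)); [|lra]. rewrite Rmult_0_r. rewrite <- H. ring. }
  apply Rmult_integral in H0. destruct H0 as [H0|H0]; [apply Rmult_integral in H0; destruct H0|]; lra.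
Qed.

Lemma Wt_root u v x : gg u v x = 0 -> Wt u v x = 2 + x * gd u v x.
Proof. intro H. rewrite Wt_ident, H. ring. Qed.

Lemma sorted_char u v a b c : 0 < u -> 0 < v -> 1 < u*v -> a < b < c -> Fact u v a b c ->
  (forall x y, stable_pos_eq u v x y <-> y = v*x*(1-x) /\ (x = a \/ x = c) /\ 0 < Wt u v x)
  /\ 0 < Wt u v b.
Proof.
  intros hu hv huv [hab hbc] Hf.
  assert (huv2 : 0 < u*v^2) by (apply Rmult_lt_0_compat; [|apply pow_lt]; auto).
  assert (ga : gg u v a = 0) by (rewrite Hf; ring).
  assert (gb : gg u v b = 0) by (rewrite Hf; ring).
  assert (gc : gg u v c = 0) by (rewrite Hf; ring).
  assert (da : gd u v a < 0).
  { rewrite (gd_root u v a b c hu hv Hf).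
    assert (0 < u*v^2*((b-a)*(c-a))) by (apply Rmult_lt_0_compat; [|apply Rmult_lt_0_compat]; lra). nra. }
  assert (Hf' : Fact u v b a c) by (intro x; rewrite Hf; ring).
  assert (Hf'' : Fact u v c a b) by (intro x; rewrite Hf; ring).
  assert (db : 0 < gd u v b).
  { rewrite (gd_root u v b a c hu hv Hf').
    assert (0 < u*v^2*((b-a)*(c-b))) by (apply Rmult_lt_0_compat; [|apply Rmult_lt_0_compat]; lra). nra. }
  assert (dc : gd u v c < 0).
  { rewrite (gd_root u v c a b hu hv Hf'').
    assert (0 < u*v^2*((c-a)*(c-b))) by (apply Rmult_lt_0_compat; [|apply Rmult_lt_0_compat]; lra). nra. }
  split.
  - intros x y. rewrite spe_iff by auto. split.
    + intros [Hy [Hg [Hd HW]]]. split; [auto|split; [|auto]].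
      destruct (root_of_fact u v a b c x Hf hu hv Hg) as [-> | [-> | ->]]; auto. lra.
    + intros [Hy [Hx HW]]. split; [auto|].
      destruct Hx as [-> | ->]; repeat split; auto.
  - rewrite (Wt_root u v b gb).
    pose proof (roots01 u v b hu hv huv gb). nra.
Qed.

Lemma sorted_two u v a b c : 0 < u -> 0 < v -> 1 < u*v -> a < b < c -> Fact u v a b c ->
  0 < Wt u v a -> 0 < Wt u v c -> TwoStable u v.
Proof.
  intros hu hv huv hs Hf Ha Hc.
  destruct (sorted_char u v a b c hu hv huv hs Hf) as [Hch _].
  exists a, (v*a*(1-a)), c, (v*c*(1-c)).
  split; [|split; [|split]].
  - intro E. injection E as E1 E2. lra.
  - apply Hch. auto.
  - apply Hch. auto.
  - intros x y Hxy. apply Hch in Hxy. destruct Hxy as [-> [[Hx1 | Hx1] _]]; subst x; auto.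
Qed.

Lemma sorted_one u v a b c : 0 < u -> 0 < v -> 1 < u*v -> a < b < c -> Fact u v a b c ->
  Wt u v a * Wt u v b * Wt u v c < 0 -> OneStable u v.
Proof.
  intros hu hv huv hs Hf Hp.
  destruct (sorted_char u v a b c hu hv huv hs Hf) as [Hch Hb].
  destruct (Rlt_dec 0 (Wt u v a)) as [Ha|Ha].
  - assert (Hab : 0 < Wt u v a * Wt u v b) by (apply Rmult_lt_0_compat; auto).
    assert (Hc : Wt u v c < 0).
    { destruct (Rlt_dec (Wt u v c) 0); auto.
      assert (0 <= Wt u v a * Wt u v b * Wt u v c) by (apply Rmult_le_pos; lra). lra. }
    exists a, (v*a*(1-a)). split.
    + apply Hch. auto.
    + intros x y Hxy. apply Hch in Hxy. destruct Hxy as [-> [[Hx1 | Hx1] HW]]; subst x; auto. lra.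
  - assert (Hc : 0 < Wt u v c).
    { destruct (Rlt_dec 0 (Wt u v c)); auto.
      assert (0 <= (- Wt u v a) * Wt u v b * (- Wt u v c)) by (apply Rmult_le_pos; [apply Rmult_le_pos|]; lra).
      lra. }
    exists c, (v*c*(1-c)). split.
    + apply Hch. auto.
    + intros x y Hxy. apply Hch in Hxy. destruct Hxy as [-> [[Hx1 | Hx1] HW]]; subst x; auto. lra.
Qed.

Lemma three_perm (P : R -> R -> R -> Prop) a b c :
  a <> b -> b <> c -> a <> c ->
  (forall a b c, a < b < c -> P a b c) ->
  P a b c \/ P a c b \/ P b a c \/ P b c a \/ P c a b \/ P c b a.
Proof.
  intros hab hbc hac H.
  destruct (Rlt_or_le a b); destruct (Rlt_or_le b c); destruct (Rlt_or_le a c).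
  all: first [ left; apply H; lra
             | right; left; apply H; lra
             | right; right; left; apply H; lra
             | right; right; right; left; apply H; lra
             | right; right; right; right; left; apply H; lra
             | right; right; right; right; right; apply H; lra
             | lra ].
Qed.

Lemma three_two u v a b c : 0 < u -> 0 < v -> 1 < u*v -> a <> b -> b <> c -> a <> c -> Fact u v a b c ->
  0 < Wt u v a -> 0 < Wt u v b -> 0 < Wt u v c -> TwoStable u v.
Proof.
  intros hu hv huv hab hbc hac Hf Ha Hb Hc.
  pose (P := fun a' b' c' => (Fact u v a' b' c' -> 0 < Wt u v a' -> 0 < Wt u v c' -> TwoStable u v)).
  assert (HP : forall a b c, a < b < c -> P a b c) by (intros; unfold P; intros; eapply sorted_two; eauto).
  destruct (three_perm P a b c hab hbc hac HP) as [H|[H|[H|[H|[H|H]]]]]; apply H; auto;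
    intro x; rewrite Hf; ring.
Qed.

Lemma three_one u v a b c : 0 < u -> 0 < v -> 1 < u*v -> a <> b -> b <> c -> a <> c -> Fact u v a b c ->
  Wt u v a * Wt u v b * Wt u v c < 0 -> OneStable u v.
Proof.
  intros hu hv huv hab hbc hac Hf Hp.
  pose (P := fun a' b' c' => (Fact u v a' b' c' -> Wt u v a' * Wt u v b' * Wt u v c' < 0 -> OneStable u v)).
  assert (HP : forall a b c, a < b < c -> P a b c) by (intros; unfold P; intros; eapply sorted_one; eauto).
  destruct (three_perm P a b c hab hbc hac HP) as [H|[H|[H|[H|[H|H]]]]]; apply H; auto;
    first [intro x; rewrite Hf; ring | nra].
Qed.

Lemma q_neg u v r x : 0 < u -> 0 < v -> Dq u v r < 0 -> -u*v^2*x^2 + bet u v r * x + gam u v r < 0.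
Proof.
  intros hu hv hD.
  assert (huv : 0 < u*v^2) by (apply Rmult_lt_0_compat; [|apply pow_lt]; auto).
  assert (E : 4*(u*v^2)*(-(-u*v^2*x^2 + bet u v r * x + gam u v r)) = (2*(u*v^2)*x - bet u v r)^2 - Dq u v r)
    by (unfold Dq; ring).
  assert (0 <= (2*(u*v^2)*x - bet u v r)^2) by apply pow2_ge_0.
  assert (0 < 4*(u*v^2)*(-(-u*v^2*x^2 + bet u v r * x + gam u v r))) by lra.
  assert (0 < -(-u*v^2*x^2 + bet u v r * x + gam u v r)).
  { destruct (Rlt_dec 0 (-(-u*v^2*x^2 + bet u v r * x + gam u v r))); auto.
    assert (0 <= 4*(u*v^2)*(-(-(-u*v^2*x^2 + bet u v r * x + gam u v r)))) by (apply Rmult_le_pos; lra).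
    lra. }
  lra.
Qed.

Lemma case2a u v : 0 < u -> 0 < v -> 1 < u*v -> kR1 u v < 0 -> kS3 u v > 0 -> OneStable u v.
Proof.
  intros hu hv huv HR HS.
  destruct (ivt_root u v hu hv huv) as [r [hr Hg]].
  pose proof (disc_ident u v r hu hv Hg) as Hd.
  assert (HR' : kR1' u v < 0) by exact HR.
  assert (hp : 0 < u^2*v^4) by (apply Rmult_lt_0_compat; apply pow_lt; auto).
  assert (HD : Dq u v r < 0).
  { destruct (Rlt_dec (Dq u v r) 0); auto.
    assert (0 <= gd u v r ^ 2 * Dq u v r) by (apply Rmult_le_pos; [apply pow2_ge_0|lra]).
    assert (u^2*v^4 * kR1' u v < 0) by (apply mul_pos_neg; auto). lra. }
  assert (Hgd : gd u v r < 0) by (rewrite <- qr_ident; apply q_neg; auto).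
  pose proof (norm_ident u v r hu hv Hg) as HN.
  pose proof (Mp_nonpos u v r hu hv HD) as HM.
  assert (hp3 : 0 < u^3*v^6) by (apply Rmult_lt_0_compat; apply pow_lt; auto).
  assert (HW : 0 < Wt u v r).
  { destruct (Rlt_dec 0 (Wt u v r)); auto.
    assert (0 <= (- Wt u v r) * (- Mp u v r)) by (apply Rmult_le_pos; lra).
    assert (0 < u^3*v^6 * kS3 u v) by (apply Rmult_lt_0_compat; lra).
    assert (Wt u v r * Mp u v r < 0) by (rewrite HN; lra).
    lra. }
  exists r, (v*r*(1-r)). split.
  - apply spe_iff; auto.
  - intros x y Hxy. apply spe_iff in Hxy; auto. destruct Hxy as [Hy [Hgx _]].
    assert (x = r).
    { pose proof (fact_ident u v r x) as Ef. rewrite Hgx, Hg in Ef.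
      pose proof (q_neg u v r x hu hv HD).
      assert ((x - r) * (-u*v^2*x^2 + bet u v r * x + gam u v r) = 0) by lra.
      apply Rmult_integral in H0. destruct H0; lra. }
    subst. reflexivity.
Qed.

Lemma three_roots u v : 0 < u -> 0 < v -> 1 < u*v -> kR1 u v > 0 ->
  exists a b c, a <> b /\ b <> c /\ a <> c /\ Fact u v a b c.
Proof.
  intros hu hv huv HR.
  destruct (ivt_root u v hu hv huv) as [r [hr Hg]].
  pose proof (disc_ident u v r hu hv Hg) as Hd.
  assert (HR' : 0 < kR1' u v) by exact HR.
  assert (hp : 0 < u^2*v^4) by (apply Rmult_lt_0_compat; apply pow_lt; auto).
  assert (huv2 : 0 < u*v^2) by (apply Rmult_lt_0_compat; [|apply pow_lt]; auto).
  assert (Hpos : 0 < gd u v r ^ 2 * Dq u v r) by (rewrite Hd; apply Rmult_lt_0_compat; auto).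
  assert (HD : 0 < Dq u v r).
  { destruct (Rlt_dec 0 (Dq u v r)); auto.
    assert (0 <= gd u v r ^ 2 * (- Dq u v r)) by (apply Rmult_le_pos; [apply pow2_ge_0|lra]). lra. }
  assert (Hgd : gd u v r <> 0).
  { intro E. rewrite E in Hpos. lra. }
  set (sq := sqrt (Dq u v r)).
  assert (Hsq : 0 < sq) by (apply sqrt_lt_R0; auto).
  assert (Hsq2 : sq * sq = Dq u v r) by (apply sqrt_sqrt; lra).
  set (s1 := (bet u v r + sq)/(2*(u*v^2))).
  set (s2 := (bet u v r - sq)/(2*(u*v^2))).
  assert (Hq : forall x, -u*v^2*x^2 + bet u v r * x + gam u v r = -u*v^2*(x-s1)*(x-s2)).
  { intro x.
    replace (-u*v^2*(x-s1)*(x-s2)) with (-u*v^2*x^2 + bet u v r * x - (bet u v r ^2 - sq*sq)/(4*(u*v^2)))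
      by (unfold s1, s2; field; lra).
    rewrite Hsq2. unfold Dq. field. lra. }
  exists r, s1, s2. split; [|split; [|split]].
  - intro E. apply Hgd. rewrite <- qr_ident, Hq, E. ring.
  - intro E. unfold s1, s2 in E.
    assert (bet u v r + sq = bet u v r - sq).
    { apply (Rmult_eq_reg_r (/(2*(u*v^2)))); [exact E|]. apply Rinv_neq_0_compat. lra. }
    lra.
  - intro E. apply Hgd. rewrite <- qr_ident, Hq, E. ring.
  - intro x. pose proof (fact_ident u v r x) as Ef. rewrite Hg in Ef. rewrite Hq in Ef. lra.
Qed.

Lemma all_pos p q r : p + q + r > 0 -> p*q + q*r + r*p > 0 -> p*q*r > 0 -> 0 < p.
Proof.
  intros H1 H2 H3.
  destruct (Rlt_dec 0 p) as [|Hp]; auto. exfalso.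
  assert (E : (-p)^3 + (p+q+r)*p^2 - (p*q+q*r+r*p)*p + p*q*r = 0) by ring.
  assert (0 <= (-p)^3) by (apply pow_le; lra).
  assert (0 <= (p+q+r)*p^2) by (apply Rmult_le_pos; [lra|apply pow2_ge_0]).
  assert (0 <= (p*q+q*r+r*p)*(-p)) by (apply Rmult_le_pos; lra).
  lra.
Qed.

Theorem theorem2 (u v : R) (hu : 0 < u) (hv : 0 < v) :
  (kR1 u v > 0 -> kS3 u v > 0 -> kA1 u v < 0 -> kA2 u v > 0 ->
     exists x1 y1 x2 y2 : R,
       (x1, y1) <> (x2, y2) /\
       stable_pos_eq u v x1 y1 /\ stable_pos_eq u v x2 y2 /\
       (forall x y : R, stable_pos_eq u v x y -> (x, y) = (x1, y1) \/ (x, y) = (x2, y2)))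
  /\
  ((u * v > 1 /\ kR1 u v < 0 /\ kS3 u v > 0) \/ (u * v > 1 /\ kR1 u v > 0 /\ kS3 u v < 0) ->
     exists x0 y0 : R,
       stable_pos_eq u v x0 y0 /\
       (forall x y : R, stable_pos_eq u v x y -> (x, y) = (x0, y0))).
Proof.
  split.
  - intros HR HS HA1 HA2.
    assert (huv : 1 < u*v).
    { unfold kR1 in HR.
      assert (0 < u*v) by (apply Rmult_lt_0_compat; auto).
      assert (0 < u^2*v + u*v^2).
      { assert (0 < u*v*u) by (apply Rmult_lt_0_compat; auto).
        assert (0 < u*v*v) by (apply Rmult_lt_0_compat; auto).
        replace (u^2*v + u*v^2) with (u*v*u + u*v*v) by ring. lra. }
      destruct (Rlt_dec 1 (u*v)); auto.
      assert (u^2*v^2 <= 1).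
      { replace (u^2*v^2) with ((u*v)*(u*v)) by ring.
        assert (u*v*(u*v) <= 1*(u*v)) by (apply Rmult_le_compat_r; lra). lra. }
      lra. }
    destruct (three_roots u v hu hv huv HR) as [a [b [c [hab [hbc [hac Hf]]]]]].
    destruct (Wsym u v a b c hu hv Hf) as [W1 [W2 W3]].
    unfold kA1 in HA1. unfold kA2 in HA2.
    pose proof (A2_lemma u v hu hv HS ltac:(lra) HA2) as He2.
    assert (P1 : Wt u v a + Wt u v b + Wt u v c > 0) by lra.
    assert (P2 : Wt u v a * Wt u v b + Wt u v b * Wt u v c + Wt u v c * Wt u v a > 0) by lra.
    assert (P3 : Wt u v a * Wt u v b * Wt u v c > 0) by lra.
    apply (three_two u v a b c hu hv huv hab hbc hac Hf).
    + apply (all_pos _ (Wt u v b) (Wt u v c)); auto.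
    + apply (all_pos _ (Wt u v c) (Wt u v a)); [lra|lra|].
      replace (Wt u v b * Wt u v c * Wt u v a) with (Wt u v a * Wt u v b * Wt u v c) by ring. auto.
    + apply (all_pos _ (Wt u v a) (Wt u v b)); [lra|lra|].
      replace (Wt u v c * Wt u v a * Wt u v b) with (Wt u v a * Wt u v b * Wt u v c) by ring. auto.
  - intros [[huv [HR HS]] | [huv [HR HS]]].
    + exact (case2a u v hu hv huv HR HS).
    + destruct (three_roots u v hu hv huv HR) as [a [b [c [hab [hbc [hac Hf]]]]]].
      destruct (Wsym u v a b c hu hv Hf) as [W1 [W2 W3]].
      apply (three_one u v a b c hu hv huv hab hbc hac Hf). lra.
Qed.
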